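(* Let $\Gamma$ be a simplicial complex on $V_1=\{x_1,\ldots,x_n\}$ with $m$ facets. Let $G_1,\ldots,G_m\subseteq V_1$ be such that each $V_1\setminus G_j$ is a face of $\Gamma$ and every facet of $\Gamma$ is of the form $V_1\setminus G_j$ for some $j$. Let $y_1,\ldots,y_m$ be new vertices, let $\Delta_{V_1}$ be the $(n-1)$-simplex on $x_1,\ldots,x_n$, and define \[\Delta'=\left\{\sigma\cup\tau:\ \sigma\in\Gamma,\ \tau\subseteq\{y_j:\sigma\subseteq V_1\setminus G_j\}\right\},\qquad \Delta=\Delta'\cup\Delta_{V_1}.\] Let $I$ be the Stanley--Reisner ideal of $\Delta$ in $R=\Bbbk[x_1,\ldots,x_n,y_1,\ldots,y_m]$ ($\Bbbk$ a field), and let $I_\Gamma$ be the extension to $R$ of the Stanley--Reisner ideal of $\Gamma$ in $\Bbbk[x_1,\ldots,x_n]$. Then $I=(x_iy_j: 1\leq j\leq m,\ x_i\in G_j)$, $I=(I+I_\Gamma)\cap(y_1,\ldots,y_m)$, and the Stanley--Reisner ideal of $\Delta'$ is $I+I_\Gamma$.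
   Context: The Stanley--Reisner ideal of a simplicial complex $\Delta$ on a vertex set $V$ (the variables of a polynomial ring) is the ideal generated by the monomials $\prod_{x\in F}x$ for $F\subseteq V$ not a face of $\Delta$. *)

(* Defs.v *)
From HB Require Import structures.
From mathcomp Require Import all_boot all_order all_algebra.
From mathcomp Require Import mpoly.
Set Implicit Arguments. Unset Strict Implicit. Unset Printing Implicit Defensive.
Import GRing.Theory.
Local Open Scope ring_scope.

Definition is_simplicial_complex (T : finType) (D : {set {set T}}) : Prop :=
  set0 \in D /\ (forall F H : {set T}, F \in D -> H \subset F -> H \in D).

Definition facets (T : finType) (D : {set {set T}}) : {set {set T}} :=
  [set F in D | [forall H in D, (F \subset H) ==> (H == F)]].

Definition ideal_gen (R : comNzRingType) (S : R -> Prop) : R -> Prop :=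
  fun p => exists (k : nat) (a g : 'I_k -> R),
    (forall i, S (g i)) /\ p = \sum_(i < k) a i * g i.

Definition ideal_add (R : comNzRingType) (I J : R -> Prop) : R -> Prop :=
  ideal_gen (fun p => I p \/ J p).
Definition ideal_cap (R : comNzRingType) (I J : R -> Prop) : R -> Prop :=
  fun p => I p /\ J p.
Definition ideal_eq (R : comNzRingType) (I J : R -> Prop) : Prop :=
  forall p, I p <-> J p.

Definition sqfree_mono (K : fieldType) (N : nat) (F : {set 'I_N}) : {mpoly K[N]} :=
  \prod_(i in F) 'X_i.

Definition SR_ideal (K : fieldType) (N : nat) (D : {set {set 'I_N}}) :
    {mpoly K[N]} -> Prop :=
  ideal_gen (fun p => exists F : {set 'I_N}, F \notin D /\ p = sqfree_mono K F).

(* Vertices of R = k[x_1..x_n, y_1..y_m]: x_i is variable lshift m i,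
   y_j is variable rshift n j. *)
Definition xv (n m : nat) (i : 'I_n) : 'I_(n + m) := lshift m i.
Definition yv (n m : nat) (j : 'I_m) : 'I_(n + m) := rshift n j.

Definition incl_x (K : fieldType) (n m : nat) (p : {mpoly K[n]}) : {mpoly K[n + m]} :=
  p \mPo [tuple 'X_(@xv n m i) | i < n].

Definition ideal_ext (R S : comNzRingType) (f : R -> S) (I : R -> Prop) : S -> Prop :=
  ideal_gen (fun s => exists r, I r /\ s = f r).

Definition Delta' (n m : nat) (Gamma : {set {set 'I_n}}) (G : 'I_m -> {set 'I_n}) :
    {set {set 'I_(n + m)}} :=
  [set F : {set 'I_(n + m)} | [exists sigma in Gamma, exists tau : {set 'I_m},
      [forall j in tau, sigma \subset ~: G j] &&
      (F == (@xv n m @: sigma) :|: (@yv n m @: tau))]].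

Definition simplexV1 (n m : nat) : {set {set 'I_(n + m)}} :=
  powerset (@xv n m @: [set: 'I_n]).

Definition Delta (n m : nat) (Gamma : {set {set 'I_n}}) (G : 'I_m -> {set 'I_n}) :
    {set {set 'I_(n + m)}} :=
  Delta' Gamma G :|: simplexV1 n m.

(* Main.v *)
Require Import Defs.
From HB Require Import structures.
From mathcomp Require Import all_boot all_order all_algebra.
From mathcomp Require Import mpoly.
Local Open Scope ring_scope.
Import GRing.Theory.
Set Implicit Arguments. Unset Strict Implicit.

Section Ideals.
Variable R : comNzRingType.
Implicit Types (S T : R -> Prop).

Lemma ig_in S g : S g -> ideal_gen S g.
Proof.
move=> Sg; exists 1%N, (fun=> 1), (fun=> g); split => // .
by rewrite big_ord1 mul1r.
Qed.

Lemma ig0 S : ideal_gen S 0.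
Proof. by exists 0%N, (fun=> 0), (fun=> 0); split; [case|rewrite big_ord0]. Qed.

Lemma igD S p q : ideal_gen S p -> ideal_gen S q -> ideal_gen S (p + q).
Proof.
move=> [k1 [a1 [g1 [S1 ->]]]] [k2 [a2 [g2 [S2 ->]]]].
exists (k1 + k2)%N,
  (fun i => match split i with inl j => a1 j | inr j => a2 j end),
  (fun i => match split i with inl j => g1 j | inr j => g2 j end).
split.
  by move=> i; case: (split i).
rewrite big_split_ord /=; congr (_ + _); apply: eq_bigr => i _.
  by rewrite (unsplitK (inl i)).
by rewrite (unsplitK (inr i)).
Qed.

Lemma igM S r p : ideal_gen S p -> ideal_gen S (r * p).
Proof.
move=> [k [a [g [Sg ->]]]]; exists k, (fun i => r * a i), g; split => //.
by rewrite mulr_sumr; apply: eq_bigr => i _; rewrite mulrA.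
Qed.

Lemma igMr S r p : ideal_gen S p -> ideal_gen S (p * r).
Proof. by rewrite mulrC; apply: igM. Qed.

Lemma ig_sum S (I : Type) (s : seq I) (P : pred I) (F : I -> R) :
  (forall i, P i -> ideal_gen S (F i)) -> ideal_gen S (\sum_(i <- s | P i) F i).
Proof.
move=> H; elim: s => [|x s IH]; first by rewrite big_nil; apply: ig0.
rewrite big_cons; case: ifP => Px; last exact: IH.
by apply: igD => //; apply: H.
Qed.

Lemma ig_ind S (P : R -> Prop) :
  P 0 -> (forall p q, P p -> P q -> P (p + q)) ->
  (forall a g, S g -> P (a * g)) -> forall p, ideal_gen S p -> P p.
Proof.
move=> P0 PD PM p [k [a [g [Sg ->]]]].
by elim/big_ind: _ => // i _; apply: PM.
Qed.

Lemma ig_mono S T p : (forall g, S g -> ideal_gen T g) ->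
  ideal_gen S p -> ideal_gen T p.
Proof.
move=> H; apply: ig_ind; [exact: ig0 | exact: igD |].
by move=> a g Sg; apply: igM; apply: H.
Qed.

Lemma ig_idem S p : ideal_gen (ideal_gen S) p -> ideal_gen S p.
Proof. by apply: ig_mono. Qed.

End Ideals.

Section Mono.
Variables (K : fieldType) (N : nat).
Implicit Types (p q : {mpoly K[N]}) (mm : 'X_{1..N}).

Definition msq (F : {set 'I_N}) : 'X_{1..N} := (\sum_(i in F) U_(i))%MM.
Definition supp mm : {set 'I_N} := [set i | (0 < mm i)%N].

Lemma msqE (F : {set 'I_N}) i : msq F i = (i \in F).
Proof.
rewrite /msq mnm_sumE.
case: (boolP (i \in F)) => iF.
  rewrite (bigD1 i) //= mnm1E eqxx big1 ?addn0 // => j /andP [_ ji].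
  by rewrite mnm1E (negbTE ji).
by rewrite big1 // => j jF; rewrite mnm1E; case: eqP => // ji; rewrite -ji jF in iF.
Qed.

Lemma mono_msq (F : {set 'I_N}) : @sqfree_mono K N F = 'X_[msq F].
Proof.
rewrite /sqfree_mono /msq.
by rewrite (big_morph (fun m => 'X_[m] : {mpoly K[N]}) (@mpolyXD _ _) (@mpolyX0 _ _)).
Qed.

Lemma supp_msq (F : {set 'I_N}) : supp (msq F) = F.
Proof. by apply/setP => i; rewrite inE msqE; case: (i \in F). Qed.

Lemma msq_le (F : {set 'I_N}) mm : F \subset supp mm -> (msq F <= mm)%MM.
Proof.
move/subsetP => H; apply/mnm_lepP => i; rewrite msqE.
by case: (boolP (i \in F)) => // /H; rewrite inE.
Qed.

Lemma supp_addr m1 m2 : supp m2 \subset supp (m1 + m2)%MM.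
Proof.
apply/subsetP => i; rewrite !inE mnmDE => h.
by apply: leq_trans h (leq_addl _ _).
Qed.

Lemma coefM_nz p q mm : (p * q)@_mm != 0 ->
  exists m1 m2, mm = (m1 + m2)%MM /\ q@_m2 != 0.
Proof.
rewrite mcoeffM => H.
case: (pickP (fun k : 'X_{1..N < (mdeg mm).+1, (mdeg mm).+1} =>
   (mm == (k.1 + k.2)%MM) && (q@_k.2 != 0))) => [k /andP [/eqP e nz]|none].
  by exists k.1, k.2.
move: H; rewrite big1 ?eqxx // => k /eqP e.
by move: (none k); rewrite {1}e eqxx /= => /negbFE /eqP ->; rewrite mulr0.
Qed.

Lemma SR_coef (D : {set {set 'I_N}}) p mm :
  (forall F H : {set 'I_N}, F \in D -> H \subset F -> H \in D) ->
  @SR_ideal K N D p -> p@_mm != 0 -> supp mm \notin D.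
Proof.
move=> Dcl Hp; move: mm; apply: (@ig_ind _ _ (fun p => forall mm, p@_mm != 0 -> supp mm \notin D)) Hp.
- by move=> mm; rewrite mcoeff0 => /eqP.
- move=> p1 p2 H1 H2 mm; rewrite mcoeffD.
  case: (eqVneq p1@_mm 0) => [e|/H1 //]; rewrite e add0r; exact: H2.
- move=> a g [F [FD ->]] mm /coefM_nz [m1 [m2 [-> nz]]].
  move: nz; rewrite mono_msq mcoeffX; case: (eqVneq (msq F) m2) => [e _|_]; last by rewrite eqxx.
  apply/negP => /Dcl /(_ (supp_addr m1 m2)).
  by rewrite -e supp_msq (negbTE FD).
Qed.

Lemma coef_ig (S : {mpoly K[N]} -> Prop) p :
  (forall mm, p@_mm != 0 -> exists s, S 'X_[s] /\ (s <= mm)%MM) -> ideal_gen S p.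
Proof.
move=> H; rewrite [p]mpolyE big_seq; apply: ig_sum => mm.
rewrite mcoeff_msupp => /H [s [Ss le]].
rewrite -(submK le) mpolyXD scalerAl; apply: igM; exact: ig_in.
Qed.

Lemma coef_SR (D : {set {set 'I_N}}) p :
  (forall mm, p@_mm != 0 -> supp mm \notin D) -> @SR_ideal K N D p.
Proof.
move=> H; apply: coef_ig => mm /H nD; exists (msq (supp mm)); split.
  by exists (supp mm); rewrite mono_msq.
exact: msq_le.
Qed.

End Mono.



Section Comb.
Variables (n m : nat) (Gamma : {set {set 'I_n}}) (G : 'I_m -> {set 'I_n}).
Local Notation xv := (@xv n m).
Local Notation yv := (@yv n m).

Lemma xv_inj : injective xv.
Proof. by move=> i j /eqP; rewrite /Defs.xv eq_shift => /eqP. Qed.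
Lemma yv_inj : injective yv.
Proof. by move=> i j /eqP; rewrite /Defs.yv eq_shift => /eqP. Qed.
Lemma xv_yv i j : (xv i == yv j) = false.
Proof. exact: eq_lrshift. Qed.
Lemma yv_xv i j : (yv j == xv i) = false.
Proof. exact: eq_rlshift. Qed.

Lemma split_cases (k : 'I_(n + m)) : (exists i, k = xv i) \/ (exists j, k = yv j).
Proof.
rewrite -(splitK k); case: (split k) => [i|j]; [left; exists i | right; exists j]; by [].
Qed.

Lemma yv_notin_xv j (s : {set 'I_n}) : (yv j \in xv @: s) = false.
Proof. by apply/negP => /imsetP [i _ /eqP]; rewrite yv_xv. Qed.
Lemma xv_notin_yv i (t : {set 'I_m}) : (xv i \in yv @: t) = false.
Proof. by apply/negP => /imsetP [j _ /eqP]; rewrite xv_yv. Qed.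

Lemma inDelta' (T : {set 'I_(n + m)}) :
  T \in Delta' Gamma G <->
  (xv @^-1: T \in Gamma /\ forall i j, xv i \in T -> yv j \in T -> i \notin G j).
Proof.
split.
  rewrite inE => /existsP [s /andP [sG /existsP [t /andP [/forallP tj /eqP eT]]]].
  have -> : xv @^-1: T = s.
    by apply/setP => i; rewrite inE eT inE xv_notin_yv orbF (mem_imset _ _ xv_inj).
  split => // i j; rewrite eT !inE xv_notin_yv yv_notin_xv orbF /=.
  rewrite (mem_imset _ _ xv_inj) (mem_imset _ _ yv_inj) => iS jt.
  move: (tj j); rewrite jt /= => /subsetP /(_ i iS); by rewrite inE.
move=> [sG cond]; rewrite inE; apply/existsP; exists (xv @^-1: T).
rewrite sG /=; apply/existsP; exists (yv @^-1: T); apply/andP; split.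
  apply/forallP => j; apply/implyP; rewrite inE => jT.
  by apply/subsetP => i; rewrite !inE => iT; apply: cond.
apply/eqP/setP => k; rewrite inE.
case: (split_cases k) => [[i ->]|[j ->]].
  by rewrite xv_notin_yv orbF (mem_imset _ _ xv_inj) inE.
by rewrite yv_notin_xv (mem_imset _ _ yv_inj) inE.
Qed.

Lemma inSimplex (T : {set 'I_(n + m)}) :
  T \in simplexV1 n m <-> (forall j, yv j \notin T).
Proof.
rewrite /simplexV1 inE; split.
  by move=> /subsetP H j; apply/negP => /H; rewrite yv_notin_xv.
move=> H; apply/subsetP => k; case: (split_cases k) => [[i ->]|[j ->]] kT.
  by rewrite (mem_imset _ _ xv_inj) inE.
by move: (H j); rewrite kT.
Qed.

End Comb.

Lemma incl_mono (K : fieldType) (n m : nat) (s : {set 'I_n}) :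
  @incl_x K n m (@sqfree_mono K n s) = @sqfree_mono K (n + m) (@xv n m @: s).
Proof.
rewrite /incl_x /sqfree_mono rmorph_prod.
rewrite (big_imset _ (in2W (@xv_inj n m))) /=.
by apply: eq_bigr => i _; rewrite comp_mpolyXU -tnth_nth tnth_mktuple.
Qed.

Lemma coefX_nz (K : fieldType) N (s mm : 'X_{1..N}) :
  ('X_[s] : {mpoly K[N]})@_mm != 0 -> mm = s.
Proof. by rewrite mcoeffX; case: (eqVneq s mm) => // _; rewrite eqxx. Qed.

Lemma supp_U N (k : 'I_N) (x : 'X_{1..N}) : k \in supp (U_(k) + x)%MM.
Proof. by rewrite inE mnmDE mnm1E eqxx. Qed.
Lemma supp_U' N (k : 'I_N) (x : 'X_{1..N}) : k \in supp (x + U_(k))%MM.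
Proof. by rewrite inE mnmDE mnm1E eqxx addn1. Qed.

Section Main.
Variables (K : fieldType) (n m : nat) (Gamma : {set {set 'I_n}}) (G : 'I_m -> {set 'I_n}).
Hypothesis Gcl : forall F H : {set 'I_n}, F \in Gamma -> H \subset F -> H \in Gamma.
Hypothesis HG : forall j, ~: G j \in Gamma.
Local Notation xv := (@xv n m).
Local Notation yv := (@yv n m).
Local Notation D' := (Delta' Gamma G).
Local Notation D := (Delta Gamma G).
Local Notation S := (simplexV1 n m).

Lemma D'cl (F H : {set 'I_(n + m)}) : F \in D' -> H \subset F -> H \in D'.
Proof.
move=> /inDelta' [sG cond] HF; apply/inDelta'; split.
  by apply: Gcl sG _; apply: preimsetS.
by move=> i j xi yj; apply: cond; apply: (subsetP HF).
Qed.

Lemma Scl (F H : {set 'I_(n + m)}) : F \in S -> H \subset F -> H \in S.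
Proof.
move=> /inSimplex FS HF; apply/inSimplex => j; apply/negP => /(subsetP HF).
by apply/negP.
Qed.

Lemma Dcl (F H : {set 'I_(n + m)}) : F \in D -> H \subset F -> H \in D.
Proof.
rewrite /Delta !in_setU => /orP [FD|FS] HF; first by rewrite (D'cl FD HF).
by rewrite (Scl FS HF) orbT.
Qed.

Lemma notD_ex (T : {set 'I_(n + m)}) : T \notin D ->
  exists i j, [/\ i \in G j, xv i \in T & yv j \in T].
Proof.
rewrite /Delta inE negb_or => /andP [nD' nS].
have [j0 yj0] : exists j, yv j \in T.
  case: (boolP [exists j, yv j \in T]) => [/existsP //|/existsPn H].
  by move: nS; rewrite (_ : T \in S) //; apply/inSimplex.
case: (boolP [exists i, exists j, [&& i \in G j, xv i \in T & yv j \in T]]).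
  by move=> /existsP [i /existsP [j /and3P [a b c]]]; exists i, j.
move=> /existsPn H; exfalso; move/negP: nD'; apply; apply/inDelta'.
have cond : forall i j, xv i \in T -> yv j \in T -> i \notin G j.
  move=> i j xi yj; apply/negP => iG; move: (H i) => /existsPn /(_ j).
  by rewrite iG xi yj.
split => //; apply: Gcl (HG j0) _; apply/subsetP => i; rewrite !inE => xi.
exact: cond xi yj0.
Qed.

Lemma notD_of (T : {set 'I_(n + m)}) i j :
  i \in G j -> xv i \in T -> yv j \in T -> T \notin D.
Proof.
move=> iG xi yj; rewrite /Delta inE negb_or; apply/andP; split.
  by apply/negP => /inDelta' [_ /(_ i j xi yj)]; rewrite iG.
by apply/negP => /inSimplex /(_ j); rewrite yj.
Qed.

Local Notation Ii := (@SR_ideal K _ D).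
Local Notation IG := (ideal_ext (@incl_x K n m) (@SR_ideal K _ Gamma)).
Local Notation Y := (ideal_gen (fun p : {mpoly K[n + m]} => exists j, p = 'X_(yv j))).
Local Notation J := (ideal_gen (fun p : {mpoly K[n + m]} =>
           exists (i : 'I_n) (j : 'I_m), i \in G j /\ p = 'X_(xv i) * 'X_(yv j))).

Lemma part1a p : Ii p -> J p.
Proof.
move=> Ip; apply: coef_ig => mm nz.
have := SR_coef Dcl Ip nz => /notD_ex [i [j [iG xi yj]]].
exists (U_(xv i) + U_(yv j))%MM; split.
  by exists i, j; split => //; rewrite mpolyXD.
apply/mnm_lepP => k; rewrite mnmDE !mnm1E.
move: xi yj; rewrite !inE.
case: (eqVneq (xv i) k) => [e|_]; case: (eqVneq (yv j) k) => [e'|_] //=.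
- by move: (@xv_yv n m i j); rewrite e e' eqxx.
- by rewrite -e addn0.
- by rewrite -e'.
Qed.

Lemma part1b p : J p -> Ii p.
Proof.
apply: ig_mono => g [i [j [iG ->]]]; apply: coef_SR => mm.
rewrite -mpolyXD => /coefX_nz ->; apply: (notD_of iG).
  exact: supp_U.
exact: supp_U'.
Qed.

Local Notation incl := (@incl_x K n m).

Lemma inclM a b : incl (a * b) = incl a * incl b.
Proof. exact: rmorphM. Qed.
Lemma inclD a b : incl (a + b) = incl a + incl b.
Proof. exact: raddfD. Qed.
Lemma incl0 : incl 0 = 0.
Proof. exact: raddf0. Qed.

Lemma preim_im (s : {set 'I_n}) : xv @^-1: (xv @: s) = s.
Proof. by apply/setP => i; rewrite inE (mem_imset _ _ (@xv_inj n m)). Qed.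

Lemma incl_SR r : @SR_ideal K _ Gamma r -> @SR_ideal K _ D' (incl r).
Proof.
apply: (@ig_ind _ _ (fun r => @SR_ideal K _ D' (incl r))).
- by rewrite incl0; apply: ig0.
- by move=> p q hp hq; rewrite inclD; apply: igD.
- move=> a g [F [FG ->]]; rewrite inclM; apply: igM; apply: ig_in.
  exists (xv @: F); split; last by rewrite incl_mono.
  by apply/negP => /inDelta' [h _]; move: h; rewrite preim_im (negbTE FG).
Qed.

Lemma part3a p : ideal_add Ii IG p -> @SR_ideal K _ D' p.
Proof.
apply: ig_mono => g [Ig|IGg].
  apply: coef_SR => mm nz; move: (SR_coef Dcl Ig nz).
  by rewrite /Delta in_setU negb_or => /andP [].
move: IGg; apply: ig_mono => s [r [Hr ->]]; exact: incl_SR.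
Qed.

Lemma part3b p : @SR_ideal K _ D' p -> ideal_add Ii IG p.
Proof.
apply: ig_mono => g [F [FD ->]].
case: (boolP (xv @^-1: F \in Gamma)) => sG.
  apply: ig_in; left; apply: ig_in; exists F; split => //.
  rewrite /Delta in_setU negb_or FD /=; apply/negP => /inSimplex FS.
  move/negP: FD; apply; apply/inDelta'; split => // i j _ yj.
  by move: (FS j); rewrite yj.
rewrite /sqfree_mono (big_setID (xv @: (xv @^-1: F))) /=.
have -> : F :&: xv @: (xv @^-1: F) = xv @: (xv @^-1: F).
  by apply/setIidPr/subsetP => k /imsetP [i]; rewrite inE => h ->.
apply: igMr; apply: ig_in; right; apply: ig_in.
exists (@sqfree_mono K _ (xv @^-1: F)); split; last by rewrite incl_mono.
by apply: ig_in; exists (xv @^-1: F).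
Qed.

Lemma Y_S p : Y p -> @SR_ideal K _ S p.
Proof.
apply: ig_mono => g [j ->]; apply: coef_SR => mm /coefX_nz ->.
by apply/negP => /inSimplex /(_ j); rewrite inE mnm1E eqxx.
Qed.

Lemma part2a p : Ii p -> ideal_cap (ideal_add Ii IG) Y p.
Proof.
move=> Ip; split; first by apply: ig_in; left.
move/part1a: Ip; apply: ig_mono => g [i [j [_ ->]]]; apply: igM; apply: ig_in.
by exists j.
Qed.

Lemma part2b p : ideal_cap (ideal_add Ii IG) Y p -> Ii p.
Proof.
move=> [/part3a h1 /Y_S h2]; apply: coef_SR => mm nz.
by rewrite /Delta in_setU negb_or (SR_coef D'cl h1 nz) (SR_coef Scl h2 nz).
Qed.

End Main.

Unset Implicit Arguments.

Theorem proposition4p5 (K : fieldType) (n m : nat)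
    (Gamma : {set {set 'I_n}}) (G : 'I_m -> {set 'I_n}) :
  is_simplicial_complex Gamma ->
  #|facets Gamma| = m ->
  (forall j, ~: G j \in Gamma) ->
  (forall F, F \in facets Gamma -> exists j, F = ~: G j) ->
  let I := @SR_ideal K _ (Delta Gamma G) in
  let IGamma := ideal_ext (@incl_x K n m) (@SR_ideal K _ Gamma) in
  let Y := ideal_gen (fun p : {mpoly K[n + m]} => exists j, p = 'X_(@yv n m j)) in
  [/\ ideal_eq I
        (ideal_gen (fun p : {mpoly K[n + m]} =>
           exists (i : 'I_n) (j : 'I_m), i \in G j /\ p = 'X_(@xv n m i) * 'X_(@yv n m j))),
      ideal_eq I (ideal_cap (ideal_add I IGamma) Y)
    & ideal_eq (@SR_ideal K _ (Delta' Gamma G)) (ideal_add I IGamma)].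
Proof.
move=> [_ Gcl] _ HG _ I IGamma Y.
split => p; split.
- exact: part1a Gcl HG p.
- exact: part1b.
- exact: part2a Gcl HG p.
- exact: part2b Gcl p.
- exact: part3b.
- exact: part3a Gcl p.
Qed.
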